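(* Let $f\in\mathcal{S}(\Omega)$. (1) $\{y^c: y\in V(N(f^c))\}\supseteq V(f)$. (2) If $f'_s(x)\in C_A$ for every $x\in\Omega\setminus\mathbb{R}$, then for every $x\in\Omega$ the sets $\mathbb{S}_x\cap V(f)$ and $\mathbb{S}_x\cap V(f^c)$ are both empty, both singletons, or both equal to $\mathbb{S}_x$. Moreover, \[V(N(f))\supseteq\bigcup_{x\in V(f)}\mathbb{S}_x=\bigcup_{x\in V(f^c)}\mathbb{S}_x\subseteq V(N(f^c)).\] If, additionally, $A$ is nonsingular, then \[\bigcup_{x\in V(f)}\mathbb{S}_x=\bigcup_{x\in V(f^c)}\mathbb{S}_x=\bigcup_{\mathbb{S}_x\subseteq V(N(f))\cap V(N(f^c))}\mathbb{S}_x,\] whence $\bigcup_{x\in V(f)}\mathbb{S}_x=\bigcup_{x\in V(f^c)}\mathbb{S}_x=V(N(f))=V(N(f^c))$ if $f$ is also tame. (3) Suppose that $f^\circ_s(x)\in C_A$ for every $x\in\Omega$ and $f'_s(x)\in C_A$ for every $x\in\Omega\setminus\mathbb{R}$. Then \[\bigcup_{\mathbb{S}_x\subseteq V(N(f))}\mathbb{S}_x=\bigcup_{x\in V(f)}\mathbb{S}_x=\bigcup_{x\in V(f^c)}\mathbb{S}_x=\bigcup_{\mathbb{S}_x\subseteq V(N(f^c))}\mathbb{S}_x,\] whence $V(N(f))=\bigcup_{x\in V(f)}\mathbb{S}_x=\bigcup_{x\in V(f^c)}\mathbb{S}_x=V(N(f^c))$ if $f$ is also tame, and $V(N(f))=V(f)=V(f^c)=V(N(f^c))$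 if $f$ is slice preserving.
   Context: Let $A$ be a finite-dimensional real algebra with unit $1$ ($\mathbb{R}$ identified with $\mathbb{R}1$) which is alternative (the associator $(x,y,z)=(xy)z-x(yz)$ is alternating), with a $^*$-involution $x\mapsto x^c$ (real linear, $(x^c)^c=x$, $(xy)^c=y^cx^c$, $r^c=r$ for $r\in\mathbb{R}$). Let $t(x)=x+x^c$, $n(x)=xx^c$; $A$ is nonsingular if $n(x)=0$ implies $x=0$. The center of $A$ is the set of $r$ with $(r,a,b)=0$ and $ra=ar$ for all $a,b$; $C_A=\{0\}\cup\{a\in A: n(a),n(a^c)$ invertible elements of the center$\}$. Let $\mathbb{S}_A=\{J\in A:t(J)=0,n(J)=1\}$ (assumed non-empty), $Q_A=\mathbb{R}\cup\{x\in A:t(x),n(x)\in\mathbb{R},\ 4n(x)>t(x)^2\}$; every $x\in Q_A$ is $\alpha+\beta J$ with $\alpha,\beta\in\mathbb{R}$, $J\in\mathbb{S}_A$, $x^c=\alpha-\beta J$, $\mathrm{im}(x)=x-t(x)/2$, and $\mathbb{S}_x=\{\alpha+\beta I:I\in\mathbb{S}_A\}$. Let $D\subseteq\mathbb{C}$ be non-empty and invariant under complex conjugation and $\Omega=\{\alpha+\beta J:\alpha+i\beta\in D,\ J\in\mathbb{S}_A\}$. Let $A_{\mathbb{C}}=\{a+\imath b:a,b\in A\}$ with product $(a+\imath b)(a'+\imath b')=aa'-bb'+\imath(ab'+ba')$, conjugation $\overline{a+\imath b}=a-\imath b$, involution $(a+\imath b)^c=a^c+\imath b^c$. A stem function is $F=F_1+\imath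 F_2:D\to A_{\mathbb{C}}$ with $F(\bar z)=\overline{F(z)}$; it induces the slice function $f=\mathcal{I}(F)$, $f(\alpha+\beta J)=F_1(\alpha+i\beta)+JF_2(\alpha+i\beta)$. Slice product $f\cdot g=\mathcal{I}(FG)$, conjugate $f^c=\mathcal{I}(F^c)$, $F^c(z)=F(z)^c$, normal function $N(f)=f\cdot f^c$. $f$ is slice preserving if $F_1,F_2$ are real valued; tame if $N(f)$ is slice preserving and $N(f)=N(f^c)$. $V(h)=\{x:h(x)=0\}$. $f^\circ_s(x)=\frac12(f(x)+f(x^c))$, $f'_s(x)=\frac12\mathrm{im}(x)^{-1}(f(x)-f(x^c))$ for $x\in\Omega\setminus\mathbb{R}$. Unions of the form $\bigcup_{\mathbb{S}_x\subseteq E}\mathbb{S}_x$ range over $x\in\Omega$. *)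

(* Defs.v *)
From HB Require Import structures.
From mathcomp Require Import all_boot all_order all_algebra.
From mathcomp Require Import boolp classical_sets reals.

Set Implicit Arguments.
Unset Strict Implicit.
Unset Printing Implicit Defensive.

Import GRing.Theory Num.Theory.
Local Open Scope ring_scope.
Local Open Scope classical_set_scope.

Record altStarAlg (R : realType) (A : vectType R) := AltStarAlg {
  amul : A -> A -> A;
  aone : A;
  aconj : A -> A;
  amulDl : forall (a : R) (x y z : A), amul (a *: x + y) z = a *: amul x z + amul y z;
  amulDr : forall (a : R) (x y z : A), amul z (a *: x + y) = a *: amul z x + amul z y;
  amul1l : forall x, amul aone x = x;
  amul1r : forall x, amul x aone = x;
  (* R is identified with R1 (so the embedding r |-> r1 is injective) *)
  aone_neq0 : aone != 0;
  (* the associator (x,y,z) = (xy)z - x(yz) is alternating: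
     it vanishes whenever two of its arguments coincide *)
  alt_xxy : forall x y, amul (amul x x) y - amul x (amul x y) = 0;
  alt_xyx : forall x y, amul (amul x y) x - amul x (amul y x) = 0;
  alt_yxx : forall x y, amul (amul y x) x - amul y (amul x x) = 0;
  aconjD : forall (a : R) (x y : A), aconj (a *: x + y) = a *: aconj x + aconj y;
  aconjK : forall x, aconj (aconj x) = x;
  aconjM : forall x y, aconj (amul x y) = amul (aconj y) (aconj x);
  aconj_real : forall r : R, aconj (r *: aone) = r *: aone
}.

Section Defs.
Context {R : realType} {A : vectType R} (S : altStarAlg A).

Local Notation "x ** y" := (amul S x y) (at level 40, left associativity).
Local Notation e1 := (aone S).
Local Notation "x ^c" := (aconj S x).

Definition isReal (x : A) : Prop := exists r : R, x = r *: e1.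

Definition tr (x : A) : A := x + x^c.
Definition nrm (x : A) : A := x ** x^c.

Definition assoc (x y z : A) : A := (x ** y) ** z - x ** (y ** z).

Definition center (r : A) : Prop :=
  (forall a b, assoc r a b = 0) /\ (forall a, r ** a = a ** r).

Definition invertible (x : A) : Prop := exists y, x ** y = e1 /\ y ** x = e1.

Definition CA (a : A) : Prop :=
  a = 0 \/
  (center (nrm a) /\ invertible (nrm a) /\ center (nrm a^c) /\ invertible (nrm a^c)).

Definition sphS (J : A) : Prop := tr J = 0 /\ nrm J = e1.

Definition nonsingular : Prop := forall x, nrm x = 0 -> x = 0.

(* D is a subset of C, alpha + i beta encoded as the pair (alpha, beta) *)
Definition Omega (D : R -> R -> Prop) : set A :=
  [set x | exists a b J, D a b /\ sphS J /\ x = a *: e1 + b *: J].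

Definition sphere (x : A) : set A :=
  [set y | exists (a b : R) J I, sphS J /\ sphS I /\
     x = a *: e1 + b *: J /\ y = a *: e1 + b *: I].

(* stem functions D -> A_C, F = G1 + i G2, with F(conj z) = conj (F z) *)
Definition is_stem (D : R -> R -> Prop) (G1 G2 : R -> R -> A) : Prop :=
  forall a b, D a b -> G1 a (- b) = G1 a b /\ G2 a (- b) = - G2 a b.

Definition induces (D : R -> R -> Prop) (G1 G2 : R -> R -> A) (h : A -> A) : Prop :=
  forall a b J, D a b -> sphS J -> h (a *: e1 + b *: J) = G1 a b + J ** G2 a b.

Definition stem_slice_preserving (D : R -> R -> Prop) (G1 G2 : R -> R -> A) : Prop :=
  forall a b, D a b -> isReal (G1 a b) /\ isReal (G2 a b).

Definition Vz (D : R -> R -> Prop) (h : A -> A) : set A :=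
  [set x | Omega D x /\ h x = 0].

Definition bigsph (E : set A) : set A := [set y | exists2 x, E x & sphere x y].

Definition bigsph_in (D : R -> R -> Prop) (E : set A) : set A :=
  [set y | exists x, Omega D x /\ sphere x `<=` E /\ sphere x y].

Definition imag (x : A) : A := x - 2^-1 *: tr x.

Definition sph_val (f : A -> A) (x : A) : A := 2^-1 *: (f x + f x^c).

(* "f'_s(x) in C_A": f'_s(x) = 1/2 im(x)^{-1} (f(x) - f(x^c)),
   with im(x)^{-1} the (two-sided) inverse of im(x) *)
Definition sph_der_in_CA (f : A -> A) (x : A) : Prop :=
  exists y, imag x ** y = e1 /\ y ** imag x = e1 /\
    CA (2^-1 *: (y ** (f x - f x^c))).

End Defs.

(* Submission.v *)
Require Import Defs.
From HB Require Import structures.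
From mathcomp Require Import all_boot all_order all_algebra.
From mathcomp Require Import boolp classical_sets reals.
Import GRing.Theory Num.Theory.
Local Open Scope ring_scope.
Local Open Scope classical_set_scope.
From mathcomp Require Import ring lra.

Local Close Scope classical_set_scope.
Section Alg.
Context {R : realType} {A : vectType R} {S : altStarAlg A}.
Local Notation "x ** y" := (amul S x y) (at level 40, left associativity).
Local Notation e1 := (aone S).
Local Notation "x ^c" := (aconj S x).

Lemma mulDl x y z : (x + y) ** z = x ** z + y ** z.
Proof. by have := amulDl S 1 x y z; rewrite !scale1r. Qed.
Lemma mulDr x y z : z ** (x + y) = z ** x + z ** y.
Proof. by have := amulDr S 1 x y z; rewrite !scale1r. Qed.
Lemma mul0l z : 0 ** z = 0.
Proof. by apply: (addrI (0 ** z)); rewrite addr0 -mulDl addr0. Qed.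
Lemma mul0r z : z ** 0 = 0.
Proof. by apply: (addrI (z ** 0)); rewrite addr0 -mulDr addr0. Qed.
Lemma mulZl a x z : (a *: x) ** z = a *: (x ** z).
Proof. by have := amulDl S a x 0 z; rewrite addr0 mul0l addr0. Qed.
Lemma mulZr a x z : z ** (a *: x) = a *: (z ** x).
Proof. by have := amulDr S a x 0 z; rewrite addr0 mul0r addr0. Qed.
Lemma mulNl x z : (- x) ** z = - (x ** z).
Proof. by rewrite -scaleN1r mulZl scaleN1r. Qed.
Lemma mulNr x z : z ** (- x) = - (z ** x).
Proof. by rewrite -scaleN1r mulZr scaleN1r. Qed.
Lemma mulBl x y z : (x - y) ** z = x ** z - y ** z.
Proof. by rewrite mulDl mulNl. Qed.
Lemma mulBr x y z : z ** (x - y) = z ** x - z ** y.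
Proof. by rewrite mulDr mulNr. Qed.

Definition mulE := (mulDl, mulDr, mulBl, mulBr, mulNl, mulNr, mulZl, mulZr, mul0l, mul0r).

Lemma conjD x y : (x + y)^c = x^c + y^c.
Proof. by have := aconjD S 1 x y; rewrite !scale1r. Qed.
Lemma conj0 : (0 : A)^c = 0.
Proof. by apply: (addrI (0^c)); rewrite addr0 -conjD addr0. Qed.
Lemma conjZ a x : (a *: x)^c = a *: x^c.
Proof. by have := aconjD S a x 0; rewrite !addr0 conj0 addr0. Qed.
Lemma conjN x : (- x)^c = - x^c.
Proof. by rewrite -scaleN1r conjZ scaleN1r. Qed.
Lemma conjB x y : (x - y)^c = x^c - y^c.
Proof. by rewrite conjD conjN. Qed.
Lemma conj1 : e1^c = e1.
Proof. by have := aconj_real S 1; rewrite !scale1r. Qed.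
Definition conjE := (conjD, conjB, conjN, conjZ, conj0, conj1, aconjK).

Lemma vext (x y : A) : (forall i, coord (vbasis fullv) i x = coord (vbasis fullv) i y) -> x = y.
Proof.
move=> H; rewrite (coord_vbasis (memvf x)) (coord_vbasis (memvf y)).
by apply: eq_bigr => i _; rewrite H.
Qed.

Ltac vco := rewrite ?(linearD, linearN, linearB, linearZ, linear0) /=.
Ltac vsolve := apply: vext => i; vco; lra.
Ltac vhyp H i := let h := fresh "h" in have h := congr1 (coord (vbasis fullv) i) H; rewrite ?(linearD, linearN, linearB, linearZ, linear0) /= in h.

Local Notation asc := (assoc S).

Lemma a0xxy x y : asc x x y = 0. Proof. exact: alt_xxy. Qed.
Lemma a0xyx x y : asc x y x = 0. Proof. exact: alt_xyx. Qed.
Lemma a0yxx x y : asc y x x = 0. Proof. exact: alt_yxx. Qed.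

Lemma a12 x y z : asc x y z = - asc y x z.
Proof.
have H := a0xxy (x + y) z; have H1 := a0xxy x z; have H2 := a0xxy y z.
move: H H1 H2; rewrite /assoc !mulE => H H1 H2.
apply: vext => i; vhyp H i; vhyp H1 i; vhyp H2 i; vco; lra.
Qed.

Lemma a23 x y z : asc x y z = - asc x z y.
Proof.
have H := a0yxx (y + z) x; have H1 := a0yxx y x; have H2 := a0yxx z x.
move: H H1 H2; rewrite /assoc !mulE => H H1 H2.
apply: vext => i; vhyp H i; vhyp H1 i; vhyp H2 i; vco; lra.
Qed.

Lemma acyc x y z : asc x y z = asc y z x.
Proof. by rewrite a12 a23 opprK. Qed.

Lemma teich a b c d :
  asc (a ** b) c d - asc a (b ** c) d + asc a b (c ** d) = a ** asc b c d + asc a b c ** d.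
Proof. rewrite /assoc !mulE; apply: vext => i; vco; lra. Qed.

Lemma K1 x y z : asc (x ** y) y z = y ** asc x y z.
Proof.
have T1 := teich x y y z. have T2 := teich y x y z. have T3 := teich y y x z.
have T4 := teich y x z y. have T5 := teich x z y y.
rewrite a0xxy a0yxx mul0r mul0l addr0 in T1.
rewrite (a12 y (x ** y) z) (a12 y x (y ** z)) a0xyx mul0l addr0 in T2.
rewrite (a12 (y ** y) x z) (a12 y (y ** x) z) a0xxy a0xxy ?mul0l ?mul0r ?addr0 (a12 y x z) mulNr in T3.
rewrite (a23 (y ** x) z y) a0xyx (a12 y x (z ** y)) (a23 x z y) mulNr (a12 y x z) mulNl in T4.
rewrite a0yxx a0yxx mul0r (a23 x (z ** y) y) (a23 x z (y ** y)) (a23 x z y) mulNl add0r in T5.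
apply: vext => i; vhyp T1 i; vhyp T2 i; vhyp T3 i; vhyp T4 i; vhyp T5 i; vco; lra.
Qed.

Lemma K3 x y z : asc (y ** x) y z = asc x y z ** y.
Proof.
have T1 := teich x y y z. have T2 := teich y x y z. have T3 := teich y y x z.
have T4 := teich y x z y. have T5 := teich x z y y.
rewrite a0xxy a0yxx mul0r mul0l addr0 in T1.
rewrite (a12 y (x ** y) z) (a12 y x (y ** z)) a0xyx mul0l addr0 in T2.
rewrite (a12 (y ** y) x z) (a12 y (y ** x) z) a0xxy a0xxy ?mul0l ?mul0r ?addr0 (a12 y x z) mulNr in T3.
rewrite (a23 (y ** x) z y) a0xyx (a12 y x (z ** y)) (a23 x z y) mulNr (a12 y x z) mulNl in T4.
rewrite a0yxx a0yxx mul0r (a23 x (z ** y) y) (a23 x z (y ** y)) (a23 x z y) mulNl add0r in T5.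
apply: vext => i; vhyp T1 i; vhyp T2 i; vhyp T3 i; vhyp T4 i; vhyp T5 i; vco; lra.
Qed.


Lemma a0yxy x y : asc y x y = 0. Proof. exact: a0xyx. Qed.

Lemma cen1 {r a b} : center S r -> asc r a b = 0.
Proof. by case=> H _; apply: H. Qed.
Lemma cen2 {r a b} : center S r -> asc a r b = 0.
Proof. by move=> H; rewrite a12 cen1 // oppr0. Qed.
Lemma cen3 {r a b} : center S r -> asc a b r = 0.
Proof. by move=> H; rewrite -acyc cen1. Qed.
Lemma cenC {r a} : center S r -> r ** a = a ** r.
Proof. by case=> _ H; apply: H. Qed.

Lemma ascE x y z : asc x y z = (x ** y) ** z - x ** (y ** z). Proof. by []. Qed.

Lemma reassoc {x y z} : asc x y z = 0 -> (x ** y) ** z = x ** (y ** z).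
Proof. by rewrite ascE => /eqP; rewrite subr_eq0 => /eqP. Qed.

Lemma cen_cancel {n w} : center S n -> invertible S n -> n ** w = 0 -> w = 0.
Proof.
move=> Hc [k [Hnk Hkn]] H.
have := reassoc (cen2 (a:=k) (b:=w) Hc); rewrite Hkn H amul1l mul0r //.
Qed.

Lemma cen_inv {n k} : center S n -> n ** k = e1 -> k ** n = e1 -> center S k.
Proof.
move=> Hc Hnk Hkn.
have kc : forall a, n ** (k ** a) = a.
  by move=> a; rewrite -(reassoc (cen1 Hc)) Hnk amul1l.
have ak : forall a, n ** (a ** k) = a.
  move=> a; rewrite -(reassoc (cen1 Hc)) (cenC Hc) (reassoc (cen2 Hc)) Hnk amul1r //.
split.
- move=> a b; apply: (cen_cancel Hc); first by exists k.
  rewrite ascE mulBr -(reassoc (cen1 Hc)) kc -(reassoc (cen1 Hc)) Hnk amul1l subrr //.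
- move=> a; apply/eqP; rewrite -subr_eq0; apply/eqP; apply: (cen_cancel Hc); first by exists k.
  by rewrite mulBr kc ak subrr.
Qed.

Definition nrmE x : nrm S x = x ** x^c. Proof. by []. Qed.

Definition CAnz (v : A) := center S (v ** v^c) /\ invertible S (v ** v^c) /\ center S (v^c ** v) /\ invertible S (v^c ** v).

Lemma CAnzC {v} : CAnz v -> CAnz v^c.
Proof. by case=> [a [b [c d]]]; rewrite /CAnz aconjK. Qed.

Lemma CA_cases {v} : CA S v -> v = 0 \/ CAnz v.
Proof.
case=> [->|[a [b [c d]]]]; [by left|right].
move: c d; rewrite /nrm aconjK => c d; by split.
Qed.

Section CAfacts.
Context {v : A}.
Hypothesis Hv : CAnz v.
Local Notation N := (v ** v^c).
Local Notation M := (v^c ** v).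
Let cN : center S N. Proof. by case: Hv. Qed.
Let iN : invertible S N. Proof. by case: Hv => _ []. Qed.
Let cM : center S M. Proof. by case: Hv => _ [_ []]. Qed.
Let iM : invertible S M. Proof. by case: Hv => _ [_ []]. Qed.

Lemma CAassoc z : asc v v^c z = 0.
Proof.
set w := asc v v^c z.
have h1 : v ** w = 0.
  have := K1 v^c v z; rewrite cen1 // (a12 v^c v z) mulNr => /eqP.
  by rewrite eq_sym oppr_eq0 => /eqP.
have h2 : v^c ** w = 0.
  by have := K1 v v^c z; rewrite cen1 //.
have h3 : w ** v = 0.
  have := K3 v^c v z; rewrite cen1 // (a12 v^c v z) mulNl => /eqP.
  by rewrite eq_sym oppr_eq0 => /eqP.
have h4 : w ** v^c = 0.
  by have := K3 v v^c z; rewrite cen1 //.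
have e1' := acyc v v^c w. have e2 := acyc v^c w v.
rewrite !ascE ?h1 ?h2 ?h3 ?h4 ?mul0r ?mul0l in e1' e2.
have e3 := cenC (a:=w) cN.
apply: (cen_cancel cN iN).
apply: vext => i; vhyp e1' i; vhyp e2 i; vhyp e3 i; vco; lra.
Qed.

Lemma CAassoc2 z : asc v^c v z = 0.
Proof. by rewrite a12 CAassoc oppr0. Qed.
Lemma CAassoc3 z : asc z v v^c = 0.
Proof. by rewrite -acyc -acyc CAassoc. Qed.
Lemma CAassoc4 z : asc z v^c v = 0.
Proof. by rewrite -acyc -acyc CAassoc2. Qed.
Lemma CAassoc5 z : asc v z v^c = 0.
Proof. by rewrite a23 CAassoc oppr0. Qed.
Lemma CAassoc6 z : asc v^c z v = 0.
Proof. by rewrite a23 CAassoc2 oppr0. Qed.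

Lemma CArcancel {z} : z ** v = 0 -> z = 0.
Proof.
move=> H; apply: (cen_cancel cN iN); rewrite (cenC cN).
by rewrite -(reassoc (CAassoc3 _)) H mul0l.
Qed.

Lemma CAlcancel {z} : v ** z = 0 -> z = 0.
Proof.
move=> H; apply: (cen_cancel cM iM).
by rewrite (reassoc (CAassoc2 _)) H mul0r.
Qed.

Lemma CANM : N = M.
Proof.
apply/eqP; rewrite -subr_eq0; apply/eqP; apply: CArcancel.
by rewrite mulBl (reassoc (CAassoc _)) (cenC cM) subrr.
Qed.

End CAfacts.


Lemma sphJc {J} : sphS S J -> J^c = - J.
Proof. case=> H _; move: H; rewrite /tr => H; apply: vext => i; vhyp H i; vco; lra. Qed.

Lemma sphJJ {J} : sphS S J -> J ** J = - e1.
Proof.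
move=> HJ; have [_ H] := HJ; move: H; rewrite /nrm (sphJc HJ) mulNr => H.
by rewrite -H opprK.
Qed.

Lemma JJl {J z} : sphS S J -> J ** (J ** z) = - z.
Proof. by move=> HJ; rewrite -(reassoc (a0xxy J z)) sphJJ // mulNl amul1l. Qed.

Lemma JJr {J z} : sphS S J -> (z ** J) ** J = - z.
Proof. by move=> HJ; rewrite (reassoc (a0yxx J z)) sphJJ // mulNr amul1r. Qed.

Definition Gone u v := u ** u^c - v ** v^c.
Definition Gtwo u v := u ** v^c + v ** u^c.

Lemma L1 J u v : sphS S J -> u = - (J ** v) ->
  Gone u^c v^c + (- J) ** Gtwo u^c v^c = 0.
Proof.
move=> HJ ->; rewrite /Gone /Gtwo !aconjK conjN aconjM (sphJc HJ) !mulE.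
have K := K1 v^c J v; rewrite !ascE (JJr HJ) mulNl mulBr in K.
apply: vext => i; vhyp K i; vco; lra.
Qed.

Lemma zeroN J u v : v = 0 \/ CAnz v -> sphS S J -> u = - (J ** v) ->
  [/\ Gone u v = 0, Gtwo u v = 0, Gone u^c v^c = 0 & Gtwo u^c v^c = 0].
Proof.
case=> [->|Hv] HJ ->.
  by rewrite /Gone /Gtwo !mul0r !oppr0 !conj0 !mul0r !subrr !addr0.
have [cN [iN [cM iM]]] := Hv.
have uc : (- (J ** v))^c = v^c ** J by rewrite conjN aconjM (sphJc HJ) mulNr opprK.
rewrite /Gone /Gtwo !aconjK uc.
have s1 : (J ** v) ** v^c = J ** (v ** v^c) by rewrite (reassoc (CAassoc3 Hv J)).
have s2 : (J ** v) ** (v^c ** J) = - (v ** v^c).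
  have h : asc (J ** v) v^c J = 0 by rewrite a23 K3 (CAassoc5 Hv) mul0l oppr0.
  by rewrite -(reassoc h) s1 (reassoc (a0xyx J (v ** v^c))) (cenC cN) (JJl HJ).
have s3 : v ** (v^c ** J) = (v ** v^c) ** J by rewrite (reassoc (CAassoc Hv J)).
have s4 : (v^c ** J) ** (J ** v) = - (v^c ** v).
  have K := K1 v^c J v; rewrite (CAassoc6 Hv J) mul0r in K.
  by move: K; rewrite ascE (JJr HJ) mulNl => /eqP; rewrite subr_eq0 => /eqP <-.
have s5 : (v^c ** J) ** v = v^c ** (J ** v) by rewrite (reassoc (CAassoc6 Hv J)).
split.
- by rewrite mulNl s2 opprK subrr.
- by rewrite mulNl s1 s3 (cenC cN) addrC subrr.
- by rewrite mulNr s4 opprK subrr.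
- by rewrite mulNr s5 subrr.
Qed.


Lemma Nconj v : (v ** v^c)^c = v ** v^c.
Proof. by rewrite aconjM aconjK. Qed.

Lemma kconj {n k} : center S n -> n^c = n -> n ** k = e1 -> k ** n = e1 -> k^c = k.
Proof.
move=> cn nc Hnk Hkn.
have h : k^c ** n = e1 by rewrite -{1}nc -aconjM Hnk conj1.
by rewrite -[k^c](amul1r S) -Hnk -(reassoc (cen2 cn)) h amul1l.
Qed.

Lemma existsI u v : CAnz v -> Gone u v = 0 -> Gtwo u v = 0 ->
  Gone u^c v^c = 0 -> Gtwo u^c v^c = 0 ->
  exists I, sphS S I /\ u + I ** v = 0.
Proof.
move=> Hv; rewrite /Gone /Gtwo !aconjK => G1 G2 H1 H2.
have [cN [[k [Nk kN]] [cM iM]]] := Hv.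
have NM := CANM Hv.
have ck := cen_inv cN Nk kN.
have kc := kconj cN (Nconj v) Nk kN.
have uN : u ** u^c = v ** v^c by apply/eqP; rewrite -subr_eq0 G1.
have uM : u^c ** u = v ** v^c by rewrite NM; apply/eqP; rewrite -subr_eq0 H1.
have Hu : CAnz u by rewrite /CAnz uN uM; split => //; split; [exists k|split => //; exists k].
pose I := - ((u ** v^c) ** k).
have Iv : I ** v = - u.
  rewrite /I mulNl; congr (- _).
  rewrite (reassoc (cen2 ck)) (cenC ck) -(reassoc (cen3 ck)).
  by rewrite (reassoc (CAassoc4 Hv u)) -NM (reassoc (cen2 cN)) Nk amul1r.
have Ic : I^c = - I.
  rewrite /I conjN aconjM kc aconjM aconjK opprK.
  apply/eqP; rewrite eq_sym -addr_eq0; apply/eqP.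
  by rewrite -(cenC ck) -mulDr G2 mul0r.
have Iu : I ** u = v.
  rewrite /I mulNl -(cenC ck) (reassoc (cen1 ck)) (reassoc (a0xyx u v^c)).
  have h : v^c ** u = - (u^c ** v) by apply/eqP; rewrite -addr_eq0 addrC H2.
  rewrite h mulNr -(reassoc (CAassoc Hu v)) uN mulNr opprK.
  by rewrite -(reassoc (cen2 cN)) kN amul1l.
have II : I ** I = - e1.
  apply/eqP; rewrite -subr_eq0 opprK; apply/eqP; apply: (CArcancel Hv).
  by rewrite mulDl amul1l (reassoc (a0xxy I v)) Iv mulNr Iu addNr.
exists I; split; last by rewrite Iv subrr.
split; first by rewrite /tr Ic subrr.
by rewrite /nrm Ic mulNr II opprK.
Qed.

Lemma GtoH u v : CA S u -> CAnz v -> Gone u v = 0 -> Gtwo u v = 0 ->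
  Gone u^c v^c = 0 /\ Gtwo u^c v^c = 0.
Proof.
move=> Hu0 Hv; rewrite /Gone /Gtwo !aconjK => G1 G2.
have [cN [iN [cM iM]]] := Hv.
have NM := CANM Hv.
have uN : u ** u^c = v ** v^c by apply/eqP; rewrite -subr_eq0 G1.
case: (CA_cases Hu0) => [u0|Hu].
  exfalso; move: uN iN; rewrite u0 conj0 mul0r => <- [k [h _]].
  by move: h; rewrite mul0l => /esym/eqP; rewrite (negbTE (aone_neq0 S)).
have uM : u^c ** u = v ** v^c by rewrite -(CANM Hu).
split; first by rewrite uM NM subrr.
apply: (cen_cancel cN iN).
have h1 : u^c ** (u ** v^c) = (v ** v^c) ** v^c by rewrite -(reassoc (CAassoc2 Hu v^c)) uM.
have h2 : u^c ** (v ** u^c) = (u^c ** v) ** u^c by rewrite (reassoc (a0xyx u^c v)).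
have h3 : u ** v^c = - (v ** u^c) by apply/eqP; rewrite -addr_eq0 G2.
have h4 : ((v ** v^c) ** v^c) ** u = (v ** v^c) ** (v^c ** u) by rewrite (reassoc (cen1 cN)).
have h5 : ((u^c ** v) ** u^c) ** u = (v ** v^c) ** (u^c ** v).
  by rewrite (reassoc (CAassoc4 Hu _)) uM (cenC cN).
move: h1; rewrite h3 mulNr h2 => h1.
have h6 := congr1 (fun t => t ** u) h1; rewrite /= mulNl h4 h5 in h6.
by rewrite mulDr -h6 subrr.
Qed.


Lemma e1_neq0 : e1 <> 0.
Proof. by move=> h; have := aone_neq0 S; rewrite h eqxx. Qed.

Lemma scale_e1_inj r s : r *: e1 = s *: e1 -> r = s.
Proof.
move=> /eqP; rewrite -subr_eq0 -scalerBl scaler_eq0 subr_eq0 => /orP [/eqP //|/eqP h].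
by case: e1_neq0.
Qed.

Lemma J_notreal J c : sphS S J -> J <> c *: e1.
Proof.
move=> HJ h.
have h1 : J^c = c *: e1 by rewrite h conjZ conj1.
rewrite (sphJc HJ) h in h1.
have c0 : c = 0.
  apply: scale_e1_inj; rewrite scale0r; apply: vext => i; vhyp h1 i; vco; lra.
have := sphJJ HJ; rewrite h c0 scale0r mul0l => /eqP; rewrite eq_sym oppr_eq0 => /eqP.
exact: e1_neq0.
Qed.

Lemma sphN {J} : sphS S J -> sphS S (- J).
Proof.
move=> HJ; have [h1 h2] := HJ; split.
  by move: h1; rewrite /tr conjN -opprD => ->; rewrite oppr0.
by move: h2; rewrite /nrm conjN mulNl mulNr opprK.
Qed.

Lemma conj_pt a b {J} : sphS S J -> (a *: e1 + b *: J)^c = a *: e1 + b *: (- J).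
Proof. by move=> HJ; rewrite conjD !conjZ conj1 (sphJc HJ). Qed.

Lemma nrm_bJ b {J} : sphS S J -> (b *: J) ** (b *: J)^c = (b * b) *: e1.
Proof.
move=> HJ; rewrite conjZ (sphJc HJ) mulZl mulZr mulNr (sphJJ HJ) opprK.
by rewrite scalerA.
Qed.

Lemma rep_eq {a b J a' b' J'} : sphS S J -> sphS S J' ->
  a *: e1 + b *: J = a' *: e1 + b' *: J' ->
  [/\ a' = a, b' *: J' = b *: J & (b' = b \/ b' = - b)].
Proof.
move=> HJ HJ' E.
have E' := congr1 (aconj S) E; rewrite !conj_pt // in E'.
have aa : a' = a.
  apply: scale_e1_inj; apply: vext => i; vhyp E i; vhyp E' i; vco.
  lra.
have bb : b' *: J' = b *: J.
  by move: E; rewrite aa => /addrI.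
split => //.
have hb : b' * b' = b * b.
  by apply: scale_e1_inj; rewrite -(nrm_bJ b HJ) -bb nrm_bJ.
have : (b' - b) * (b' + b) == 0.
  by apply/eqP; rewrite mulrBl !mulrDr hb; ring.
rewrite mulf_eq0 subr_eq0 addr_eq0 => /orP [/eqP|/eqP]; by [left|right].
Qed.

Lemma sphere_rep {a b J x y} : sphS S J -> x = a *: e1 + b *: J -> sphere S x y ->
  exists I, sphS S I /\ y = a *: e1 + b *: I.
Proof.
move=> HJ -> [a' [b' [J' [I' [HJ' [HI' [E ->]]]]]]].
have [-> _ [->|->]] := rep_eq HJ HJ' E; first by exists I'.
by exists (- I'); split; [exact: sphN|rewrite scaleNr scalerN].
Qed.

Lemma sphere_mem a b {J I} : sphS S J -> sphS S I ->
  sphere S (a *: e1 + b *: J) (a *: e1 + b *: I).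
Proof. by move=> HJ HI; exists a, b, J, I. Qed.

Lemma realJ_eq0 {c d J} : sphS S J -> c *: e1 + d *: J = 0 -> c = 0 /\ d = 0.
Proof.
move=> HJ E.
have d0 : d = 0.
  case: (eqVneq d 0) => // dn; exfalso.
  apply: (@J_notreal J (- (c / d)) HJ).
  have : d *: J = - (c *: e1) by apply/eqP; rewrite -addr_eq0 addrC E.
  move=> h; rewrite -[J](scalerK dn) h scalerN scalerA -scaleNr; congr (_ *: _).
  by rewrite mulrC.
split => //; apply: scale_e1_inj; move: E; rewrite d0 scale0r addr0 scale0r //.
Qed.

Lemma CAconj v : CA S v -> CA S v^c.
Proof.
case=> [->|[a [b [c d]]]]; first by left; rewrite conj0.
by right; rewrite aconjK.
Qed.

Lemma CAscale c v : c != 0 -> CA S (c *: v) -> CA S v.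
Proof.
move=> cn; rewrite /CA /center /invertible; case=> [h|[[ca cc] [[y [y1 y2]] [[da dc] [z [z1 z2]]]]]].
  by left; move: h => /eqP; rewrite scaler_eq0 (negbTE cn) => /eqP.
have cc0 : c * c != 0 by rewrite mulf_neq0.
have E1 : nrm S (c *: v) = (c * c) *: nrm S v by rewrite /nrm conjZ mulZl mulZr scalerA.
have E2 : nrm S (c *: v)^c = (c * c) *: nrm S v^c by rewrite /nrm !conjZ mulZl mulZr scalerA.
rewrite E1 in ca cc y1 y2; rewrite E2 in da dc z1 z2.
right; split; [split|split; [|split; [split|]]].
- move=> p q; have := ca p q; rewrite /assoc !mulZl -scalerBr => /eqP.
  by rewrite scaler_eq0 (negbTE cc0) => /eqP.
- move=> p; have := cc p; rewrite mulZl mulZr => /(congr1 (fun t => (c * c)^-1 *: t)).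
  by rewrite !scalerA mulVf // !scale1r.
- exists ((c * c) *: y); split; first by rewrite mulZr -mulZl.
  by rewrite mulZl -mulZr.
- move=> p q; have := da p q; rewrite /assoc !mulZl -scalerBr => /eqP.
  by rewrite scaler_eq0 (negbTE cc0) => /eqP.
- move=> p; have := dc p; rewrite mulZl mulZr => /(congr1 (fun t => (c * c)^-1 *: t)).
  by rewrite !scalerA mulVf // !scale1r.
- exists ((c * c) *: z); split; first by rewrite mulZr -mulZl.
  by rewrite mulZl -mulZr.
Qed.

End Alg.

Local Open Scope classical_set_scope.
Ltac vco := rewrite ?(linearD, linearN, linearB, linearZ, linear0) /=.
Ltac vhyp H i := let h := fresh "h" in have h := congr1 (coord (vbasis fullv) i) H; rewrite ?(linearD, linearN, linearB, linearZ, linear0) /= in h.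

Section Main.
Variables (R : realType) (A : vectType R) (S : altStarAlg A).
Local Notation "x ** y" := (amul S x y) (at level 40, left associativity).
Local Notation e1 := (aone S).
Local Notation "x ^c" := (aconj S x).
Local Notation Gone := (@Gone _ _ S).
Local Notation Gtwo := (@Gtwo _ _ S).
Local Notation CAnz := (@CAnz _ _ S).

Variable D : R -> R -> Prop.
Variables F1 F2 : R -> R -> A.
Hypothesis HF : is_stem D F1 F2.
Variable J0 : A.
Hypothesis HJ0 : sphS S J0.

Definition fam (h Nh : A -> A) (U V : R -> R -> A) :=
  forall a b I, D a b -> sphS S I ->
    h (a *: e1 + b *: I) = U a b + I ** V a b /\
    Nh (a *: e1 + b *: I) = Gone (U a b) (V a b) + I ** Gtwo (U a b) (V a b).

Lemma omega_rep x : Omega S D x ->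
  exists a b J, [/\ D a b, sphS S J & x = a *: e1 + b *: J].
Proof. by case=> a [b [J [Dab [HJ ->]]]]; exists a, b, J. Qed.

Lemma omega_mem {a b I} : D a b -> sphS S I -> Omega S D (a *: e1 + b *: I).
Proof. by move=> Dab HI; exists a, b, I. Qed.

Definition Zs (U V : R -> R -> A) a b := exists I, sphS S I /\ U a b + I ** V a b = 0.

Section Gen.
Context {h Nh : A -> A} {U V : R -> R -> A}.
Hypothesis Hfam : fam h Nh U V.
Local Notation Zs := (Zs U V).

Lemma Vz_rep x : Vz S D h x ->
  exists a b J, [/\ D a b, sphS S J, x = a *: e1 + b *: J & U a b + J ** V a b = 0].
Proof.
case=> /omega_rep [a [b [J [Dab HJ ->]]]] hx.
by exists a, b, J; split => //; rewrite -(Hfam _ _ _ Dab HJ).1.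
Qed.

Lemma inU {a b I} : D a b -> sphS S I -> Zs a b -> bigsph S (Vz S D h) (a *: e1 + b *: I).
Proof.
move=> Dab HI [I0 [HI0 z]]; exists (a *: e1 + b *: I0); last exact: sphere_mem.
by split; [exact: omega_mem|rewrite (Hfam _ _ _ Dab HI0).1].
Qed.

Lemma outU y : bigsph S (Vz S D h) y ->
  exists a b I, [/\ D a b, sphS S I, y = a *: e1 + b *: I & Zs a b].
Proof.
case=> x0 /Vz_rep [a [b [J [Dab HJ E z]]]] sph.
have [I [HI ->]] := sphere_rep HJ E sph.
by exists a, b, I; split => //; exists J.
Qed.

Lemma NhG {a b} : D a b -> Gone (U a b) (V a b) = 0 -> Gtwo (U a b) (V a b) = 0 ->
  forall I, sphS S I -> Nh (a *: e1 + b *: I) = 0.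
Proof. by move=> Dab g1 g2 I HI; rewrite (Hfam _ _ _ Dab HI).2 g1 g2 mul0r addr0. Qed.

Lemma sphere_in_Vz {a b J} : D a b -> sphS S J ->
  Gone (U a b) (V a b) = 0 -> Gtwo (U a b) (V a b) = 0 ->
  sphere S (a *: e1 + b *: J) `<=` Vz S D Nh.
Proof.
move=> Dab HJ g1 g2 y sph; have [I [HI ->]] := sphere_rep HJ erefl sph.
by split; [exact: omega_mem|exact: NhG].
Qed.

Lemma sphere_sub_Vz {a b J} : D a b -> sphS S J ->
  sphere S (a *: e1 + b *: J) `<=` Vz S D Nh ->
  Gone (U a b) (V a b) = 0 /\ Gtwo (U a b) (V a b) = 0.
Proof.
move=> Dab HJ sub.
have [_ h1] := sub _ (sphere_mem a b HJ HJ).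
have [_ h2] := sub _ (sphere_mem a b HJ (sphN HJ)).
rewrite (Hfam _ _ _ Dab HJ).2 in h1; rewrite (Hfam _ _ _ Dab (sphN HJ)).2 mulNl in h2.
set g1 := Gone _ _ in h1 h2 *; set g2 := Gtwo _ _ in h1 h2 *.
have G1 : g1 = 0 by apply: vext => i; vhyp h1 i; vhyp h2 i; vco; lra.
split => //.
rewrite G1 add0r in h1.
by have := congr1 (amul S J) h1; rewrite (JJl HJ) mul0r => /eqP; rewrite oppr_eq0 => /eqP.
Qed.

Lemma Pfull {a b J} : D a b -> sphS S J -> U a b = 0 -> V a b = 0 ->
  sphere S (a *: e1 + b *: J) `&` Vz S D h = sphere S (a *: e1 + b *: J).
Proof.
move=> Dab HJ u0 v0; apply/seteqP; split => y; first by case.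
move=> sph; split => //; have [I [HI ->]] := sphere_rep HJ erefl sph.
by split; [exact: omega_mem|rewrite (Hfam _ _ _ Dab HI).1 u0 v0 mul0r addr0].
Qed.

Lemma Pempty {a b J} : D a b -> sphS S J -> ~ Zs a b ->
  sphere S (a *: e1 + b *: J) `&` Vz S D h = set0.
Proof.
move=> Dab HJ nZ; apply/seteqP; split => y //; case=> sph [_ hy].
have [I [HI E]] := sphere_rep HJ erefl sph.
by apply: nZ; exists I; split => //; rewrite -(Hfam _ _ _ Dab HI).1 -E.
Qed.

Lemma Psingle {a b J I0} : D a b -> sphS S J -> CAnz (V a b) -> sphS S I0 ->
  U a b + I0 ** V a b = 0 ->
  sphere S (a *: e1 + b *: J) `&` Vz S D h = [set a *: e1 + b *: I0].
Proof.
move=> Dab HJ Hv HI0 z; apply/seteqP; split => y.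
  case=> sph [_ hy]; have [I [HI E]] := sphere_rep HJ erefl sph.
  rewrite E (Hfam _ _ _ Dab HI).1 in hy; rewrite E /=.
  have : (I - I0) ** V a b = 0 by rewrite mulBl; apply: vext => i; vhyp z i; vhyp hy i; vco; lra.
  by move/(CArcancel Hv)/eqP; rewrite subr_eq0 => /eqP ->.
move=> /= ->; split; first exact: sphere_mem.
by split; [exact: omega_mem|rewrite (Hfam _ _ _ Dab HI0).1].
Qed.

End Gen.


Lemma Zconj_alg {u v} : v = 0 \/ CAnz v -> (exists I, sphS S I /\ u + I ** v = 0) ->
  exists I, sphS S I /\ u^c + I ** v^c = 0.
Proof.
case=> [v0|Hv] [I0 [HI0 z]].
  exists I0; split => //; move: z; rewrite v0 mul0r addr0 => ->.
  by rewrite conj0 mul0r addr0.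
have u0 : u = - (I0 ** v) by apply/eqP; rewrite -addr_eq0 z.
have [g1 g2 h1 h2] := zeroN _ _ _ (or_intror Hv) HI0 u0.
apply: existsI => //; first exact: CAnzC.
  by rewrite /Submission.Gone !aconjK; exact: g1.
by rewrite /Submission.Gtwo !aconjK; exact: g2.
Qed.

Lemma Vb0 a : D a 0 -> F2 a 0 = 0.
Proof.
move=> Da; have [_ h] := HF _ _ Da; rewrite oppr0 in h.
by apply: vext => i; vhyp h i; vco; lra.
Qed.

Variables f fc Nf Nfc : A -> A.
Hypothesis Hf : induces S D F1 F2 f.
Hypothesis Hfc : induces S D (fun a b => aconj S (F1 a b)) (fun a b => aconj S (F2 a b)) fc.
Hypothesis HNf : induces S D
     (fun a b => amul S (F1 a b) (aconj S (F1 a b)) - amul S (F2 a b) (aconj S (F2 a b)))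
     (fun a b => amul S (F1 a b) (aconj S (F2 a b)) + amul S (F2 a b) (aconj S (F1 a b)))
     Nf.
Hypothesis HNfc : induces S D
     (fun a b => amul S (aconj S (F1 a b)) (F1 a b) - amul S (aconj S (F2 a b)) (F2 a b))
     (fun a b => amul S (aconj S (F1 a b)) (F2 a b) + amul S (aconj S (F2 a b)) (F1 a b))
     Nfc.

Definition F1c a b := (F1 a b)^c.
Definition F2c a b := (F2 a b)^c.

Lemma fam_f : fam f Nf F1 F2.
Proof. by move=> a b I Dab HI; split; [apply: Hf|apply: HNf]. Qed.

Lemma fam_fc : fam fc Nfc F1c F2c.
Proof.
move=> a b I Dab HI; split; first by apply: Hfc.
by rewrite /Submission.Gone /Submission.Gtwo /F1c /F2c !aconjK; apply: HNfc.
Qed.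

Lemma sph_der a b : D a b -> b != 0 -> sph_der_in_CA S f (a *: e1 + b *: J0) ->
  CA S (F2 a b).
Proof.
move=> Dab bn [y [y1 [y2 Hc]]].
have im : imag S (a *: e1 + b *: J0) = b *: J0.
  rewrite /imag /tr (conj_pt _ _ HJ0); apply: vext => i; vco; lra.
rewrite im in y1 y2.
have yE : y = - (b^-1 *: J0).
  have := congr1 (fun t => t ** J0) y2; rewrite /= mulZr mulZl (JJr HJ0) amul1l.
  by move=> h; rewrite -h scalerA mulVf // scale1r opprK.
rewrite (conj_pt _ _ HJ0) (Hf _ _ _ Dab HJ0) (Hf _ _ _ Dab (sphN HJ0)) in Hc.
apply: (@CAscale _ _ S b^-1); first by rewrite invr_neq0.
  move: Hc; rewrite yE.
suff -> : 2^-1 *: (- (b^-1 *: J0) ** (F1 a b + J0 ** F2 a b - (F1 a b + - J0 ** F2 a b))) = b^-1 *: F2 a b by [].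
rewrite !mulE !(JJl HJ0); apply: vext => i; vco; lra.
Qed.

Lemma sph_val_E a b : D a b -> sph_val S f (a *: e1 + b *: J0) = F1 a b.
Proof.
move=> Dab; rewrite /sph_val (conj_pt _ _ HJ0) (Hf _ _ _ Dab HJ0) (Hf _ _ _ Dab (sphN HJ0)) mulNl.
by apply: vext => i; vco; lra.
Qed.


Lemma notreal a b J : sphS S J -> b != 0 -> ~ isReal S (a *: e1 + b *: J).
Proof.
move=> HJ bn [r E].
have : (a - r) *: e1 + b *: J = 0 by rewrite scalerBl -addrAC E subrr.
by case/(realJ_eq0 HJ) => _ b0; move: bn; rewrite b0 eqxx.
Qed.

Definition Vok (V : R -> R -> A) := forall a b, D a b -> V a b = 0 \/ CAnz (V a b).

Lemma VokFc : Vok F2 -> Vok F2c.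
Proof.
move=> H a b Dab; rewrite /F2c; case: (H a b Dab) => [->|Hv]; first by left; rewrite conj0.
by right; apply: CAnzC.
Qed.

Section Gen2.
Context {h Nh : A -> A} {U V : R -> R -> A}.
Hypothesis Hfam : fam h Nh U V.
Hypothesis HV : Vok V.

Lemma Zs_G {a b} : D a b -> Zs U V a b ->
  [/\ Gone (U a b) (V a b) = 0, Gtwo (U a b) (V a b) = 0,
      Gone (U a b)^c (V a b)^c = 0 & Gtwo (U a b)^c (V a b)^c = 0].
Proof.
move=> Dab [I0 [HI0 z]].
have u0 : U a b = - (I0 ** V a b) by apply/eqP; rewrite -addr_eq0 z.
exact: (zeroN _ _ _ (HV _ _ Dab) HI0 u0).
Qed.

Lemma U_sub_VN : bigsph S (Vz S D h) `<=` Vz S D Nh.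
Proof.
move=> y /(outU Hfam) [a [b [I [Dab HI -> Z]]]].
have [g1 g2 _ _] := Zs_G Dab Z.
by split; [exact: omega_mem|exact: (NhG Hfam Dab g1 g2 _ HI)].
Qed.

Lemma sphere_of y : Omega S D y -> sphere S y y.
Proof. by case/omega_rep=> a [b [J [_ HJ ->]]]; exact: sphere_mem. Qed.

Lemma Ub_sub_bin : bigsph S (Vz S D h) `<=` bigsph_in S D (Vz S D Nh).
Proof.
move=> y /(outU Hfam) [a [b [I [Dab HI -> Z]]]].
have [g1 g2 _ _] := Zs_G Dab Z.
exists (a *: e1 + b *: I); split; first exact: omega_mem.
split; [exact: (sphere_in_Vz Hfam Dab HI g1 g2)|exact: sphere_mem].
Qed.

Lemma bin_eq : (forall a b, D a b -> CA S (U a b)) ->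
  bigsph_in S D (Vz S D Nh) = bigsph S (Vz S D h).
Proof.
move=> HU; apply/seteqP; split; last exact: Ub_sub_bin.
move=> y [x [/omega_rep [a [b [J [Dab HJ Ex]]]] [sub sph]]].
rewrite Ex in sub sph.
have [g1 g2] := sphere_sub_Vz Hfam Dab HJ sub.
have [I [HI ->]] := sphere_rep HJ erefl sph.
apply: (inU Hfam Dab HI).
case: (HV _ _ Dab) => [v0|Hv].
  move: g1; rewrite /Submission.Gone v0 conj0 mul0r subr0 => g1.
  case: (CA_cases (HU a b Dab)) => [u0|[_ [[k [k1 _]] _]]].
    by exists J; split => //; rewrite u0 v0 mul0r addr0.
  by exfalso; move: k1; rewrite g1 mul0l => /esym; exact: e1_neq0.
have [h1 h2] := GtoH _ _ (HU a b Dab) Hv g1 g2.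
exact: existsI.
Qed.

Lemma tameG y : (forall a b, D a b -> isReal S (Gone (U a b) (V a b)) /\ isReal S (Gtwo (U a b) (V a b))) ->
  Vz S D Nh y -> exists a b J, [/\ D a b, sphS S J, y = a *: e1 + b *: J,
     Gone (U a b) (V a b) = 0 & Gtwo (U a b) (V a b) = 0].
Proof.
move=> Ht [/omega_rep [a [b [J [Dab HJ ->]]]] hy].
exists a, b, J; rewrite (Hfam _ _ _ Dab HJ).2 in hy.
have [[g1 E1] [g2 E2]] := Ht a b Dab.
rewrite E1 E2 mulZr amul1r in hy.
have [g10 g20] := realJ_eq0 HJ hy.
by split => //; [rewrite E1 g10|rewrite E2 g20]; exact: scale0r.
Qed.

End Gen2.


Lemma part1 : Vz S D f `<=` [set aconj S y | y in Vz S D Nfc].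
Proof.
move=> x /(Vz_rep fam_f) [a [b [J [Dab HJ -> z]]]].
have u0 : F1 a b = - (J ** F2 a b) by apply/eqP; rewrite -addr_eq0 z.
exists (a *: e1 + b *: (- J)).
  split; first exact: (omega_mem Dab (sphN HJ)).
  rewrite (fam_fc _ _ _ Dab (sphN HJ)).2 /F1c /F2c.
  exact: (L1 _ _ _ HJ u0).
by rewrite (conj_pt _ _ (sphN HJ)) opprK.
Qed.

Section Part2.
Hypothesis H2 : Vok F2.

Lemma ZsC {a b} : D a b -> Zs F1 F2 a b -> Zs F1c F2c a b.
Proof. by move=> Dab Z; exact: (Zconj_alg (H2 _ _ Dab) Z). Qed.

Lemma ZsC' {a b} : D a b -> Zs F1c F2c a b -> Zs F1 F2 a b.
Proof.
move=> Dab Z; have := Zconj_alg (VokFc H2 _ _ Dab) Z.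
by rewrite /F1c /F2c !aconjK.
Qed.

Lemma trich x : Omega S D x ->
        let P := sphere S x `&` Vz S D f in
        let Q := sphere S x `&` Vz S D fc in
        (P = set0 /\ Q = set0)
        \/ ((exists z, P = [set z]) /\ (exists z, Q = [set z]))
        \/ (P = sphere S x /\ Q = sphere S x).
Proof.
case/omega_rep => a [b [J [Dab HJ ->]]] P Q.
case: (H2 _ _ Dab) => [v0|Hv].
  case: (eqVneq (F1 a b) 0) => [u0|un].
    right; right; split; first exact: (Pfull fam_f Dab HJ u0 v0).
    by apply: (Pfull fam_fc Dab HJ); rewrite /F1c /F2c ?u0 ?v0 conj0.
  left; split; [apply: (Pempty fam_f Dab HJ)|apply: (Pempty fam_fc Dab HJ)].
    by rewrite /Zs; case=> I [_ z]; move: z; rewrite v0 mul0r addr0 => z; move: un; rewrite z eqxx.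
  rewrite /Zs; case=> I [_ z]; move: z; rewrite /F1c /F2c v0 conj0 mul0r addr0 => z.
  by move: un; rewrite -[F1 a b](aconjK S) z conj0 eqxx.
case: (pselect (Zs F1 F2 a b)) => [Z|nZ].
  have [I0 [HI0 z]] := Z; have [I1 [HI1 z1]] := ZsC Dab Z.
  right; left; split.
    by exists (a *: e1 + b *: I0); exact: (Psingle fam_f Dab HJ Hv HI0 z).
  exists (a *: e1 + b *: I1); apply: (Psingle fam_fc Dab HJ _ HI1 z1). exact: (CAnzC Hv).
left; split; first exact: (Pempty fam_f Dab HJ nZ).
by apply: (Pempty fam_fc Dab HJ) => Zc; apply: nZ; exact: ZsC'.
Qed.

Lemma UfUfc : bigsph S (Vz S D f) = bigsph S (Vz S D fc).
Proof.
apply/seteqP; split.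
  move=> y /(outU fam_f) [a [b [I [Dab HI -> Z]]]].
  exact: (inU fam_fc Dab HI (ZsC Dab Z)).
move=> y /(outU fam_fc) [a [b [I [Dab HI -> Z]]]].
exact: (inU fam_f Dab HI (ZsC' Dab Z)).
Qed.

Lemma part2_ns : nonsingular S ->
  bigsph S (Vz S D fc) = bigsph_in S D (Vz S D Nf `&` Vz S D Nfc).
Proof.
move=> ns; apply/seteqP; split.
  move=> y /(outU fam_fc) [a [b [I [Dab HI -> Zc]]]].
  have [g1 g2 h1 h2] := Zs_G H2 Dab (ZsC' Dab Zc).
  exists (a *: e1 + b *: I); split; first exact: omega_mem.
  split; last exact: sphere_mem.
  move=> z hz; split; first exact: (sphere_in_Vz fam_f Dab HI g1 g2).
  exact: (sphere_in_Vz fam_fc Dab HI h1 h2).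
move=> y [x [/omega_rep [a [b [J [Dab HJ Ex]]]] [sub sph]]].
rewrite Ex in sub sph.
have [g1 g2] := sphere_sub_Vz fam_f Dab HJ (fun z hz => (sub z hz).1).
have [h1 h2] := sphere_sub_Vz fam_fc Dab HJ (fun z hz => (sub z hz).2).
have [I [HI ->]] := sphere_rep HJ erefl sph.
apply: (inU fam_fc Dab HI); apply: ZsC => //.
case: (H2 _ _ Dab) => [v0|Hv].
  move: g1; rewrite /Submission.Gone v0 conj0 mul0r subr0 => g1.
  have u0 : F1 a b = 0 by apply: ns.
  by exists J; split => //; rewrite u0 v0 mul0r addr0.
exact: (existsI _ _ Hv g1 g2 h1 h2).
Qed.

Lemma part2_tame : nonsingular S ->
  stem_slice_preserving S D
      (fun a b => amul S (F1 a b) (aconj S (F1 a b)) - amul S (F2 a b) (aconj S (F2 a b)))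
      (fun a b => amul S (F1 a b) (aconj S (F2 a b)) + amul S (F2 a b) (aconj S (F1 a b))) ->
  (forall x, Omega S D x -> Nf x = Nfc x) ->
  bigsph S (Vz S D fc) = Vz S D Nf.
Proof.
move=> ns T1 T2; apply/seteqP; split.
  move=> y /(U_sub_VN fam_fc (VokFc H2)) [Om e]; split => //; by rewrite T2.
move=> y Vy; have [a [b [J [Dab HJ E g1 g2]]]] := tameG fam_f _ T1 Vy.
rewrite part2_ns //; exists y; split; first by case: Vy.
split; last by rewrite E; exact: sphere_mem.
move=> z hz; rewrite E in hz.
have Vz' := sphere_in_Vz fam_f Dab HJ g1 g2 _ hz.
split => //; case: Vz' => Oz e; split => //; by rewrite -T2.
Qed.

End Part2.

Section Part3.
Hypothesis H2 : Vok F2.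
Hypothesis H3 : forall x, Omega S D x -> CA S (sph_val S f x).

Lemma CAU a b : D a b -> CA S (F1 a b).
Proof. by move=> Dab; have := H3 _ (omega_mem Dab HJ0); rewrite sph_val_E. Qed.

Lemma bin_f : bigsph_in S D (Vz S D Nf) = bigsph S (Vz S D f).
Proof. exact: (bin_eq fam_f H2 CAU). Qed.

Lemma bin_fc : bigsph_in S D (Vz S D Nfc) = bigsph S (Vz S D fc).
Proof. exact: (bin_eq fam_fc (VokFc H2) (fun a b Dab => CAconj _ (CAU a b Dab))). Qed.

Lemma tame3 :
  stem_slice_preserving S D
      (fun a b => amul S (F1 a b) (aconj S (F1 a b)) - amul S (F2 a b) (aconj S (F2 a b)))
      (fun a b => amul S (F1 a b) (aconj S (F2 a b)) + amul S (F2 a b) (aconj S (F1 a b))) ->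
  Vz S D Nf = bigsph S (Vz S D f).
Proof.
move=> T1; apply/seteqP; split; last exact: (U_sub_VN fam_f H2).
move=> y Vy; have [a [b [J [Dab HJ E g1 g2]]]] := tameG fam_f _ T1 Vy.
rewrite -bin_f; exists y; split; first by case: Vy.
split; last by rewrite E; exact: sphere_mem.
by rewrite E; exact: (sphere_in_Vz fam_f Dab HJ g1 g2).
Qed.

End Part3.


Lemma rs00 (r s : R) : r * r - s * s = 0 -> r * s + s * r = 0 -> r = 0 /\ s = 0.
Proof.
move=> c1 c2.
have rs : r * s = 0.
  have : 2 * (r * s) = 0 by rewrite -c2; ring.
  by move/eqP; rewrite mulf_eq0 pnatr_eq0 /= => /eqP.
move/eqP: rs; rewrite mulf_eq0 => /orP [/eqP r0|/eqP s0].
  by move: c1; rewrite r0 GRing.mul0r sub0r => /eqP; rewrite oppr_eq0 mulf_eq0 orbb => /eqP.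
by move: c1; rewrite s0 GRing.mul0r subr0 => /eqP; rewrite mulf_eq0 orbb => /eqP.
Qed.

Section SP.
Hypothesis SP : stem_slice_preserving S D F1 F2.

Lemma sp_pt y : Omega S D y ->
  fc y = f y /\ Nfc y = Nf y /\ (Nf y = 0 <-> f y = 0).
Proof.
case/omega_rep => a [b [J [Dab HJ ->]]].
have [[r Er] [s Es]] := SP _ _ Dab.
rewrite (Hf _ _ _ Dab HJ) (Hfc _ _ _ Dab HJ) (HNf _ _ _ Dab HJ) (HNfc _ _ _ Dab HJ) Er Es !conjZ conj1.
split => //; split => //.
have fE : r *: e1 + J ** (s *: e1) = r *: e1 + s *: J by rewrite mulZr amul1r.
have NE : r *: e1 ** (r *: e1) - s *: e1 ** (s *: e1) +
    J ** (r *: e1 ** (s *: e1) + s *: e1 ** (r *: e1)) =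
    (r * r - s * s) *: e1 + (r * s + s * r) *: J.
  rewrite !mulZl !mulZr !amul1l !mulDr !mulZr !amul1r.
  by apply: vext => i; vco; ring.
rewrite fE NE; split.
  by case/(realJ_eq0 HJ) => c1 c2; have [-> ->] := rs00 _ _ c1 c2; rewrite !scale0r addr0.
by case/(realJ_eq0 HJ) => -> ->; rewrite !GRing.mul0r !subrr addr0 !scale0r addr0.
Qed.

Lemma sp_eq : Vz S D Nf = Vz S D f /\ Vz S D f = Vz S D fc /\ Vz S D fc = Vz S D Nfc.
Proof.
split; [|split]; apply/seteqP; split => y [Oy hy]; split => //;
  have [e1' [e2' e3']] := sp_pt _ Oy.
- by apply/e3'.
- by apply/e3'.
- by rewrite e1'.
- by rewrite -e1'.
- by rewrite e2' e1' in hy *; apply/e3'.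
- by rewrite e1'; apply/e3'; rewrite -e2'.
Qed.

End SP.


Lemma VokF : (forall x, Omega S D x -> ~ isReal S x -> sph_der_in_CA S f x) -> Vok F2.
Proof.
move=> H a b Dab; case: (eqVneq b 0) => [b0|bn].
  by left; move: Dab; rewrite b0 => Dab; exact: Vb0.
apply: CA_cases; apply: (sph_der _ _ Dab bn); apply: H; first exact: omega_mem.
exact: notreal.
Qed.

Lemma main :
  let Om := Omega S D in
  let tame :=
    stem_slice_preserving S D
      (fun a b => amul S (F1 a b) (aconj S (F1 a b)) - amul S (F2 a b) (aconj S (F2 a b)))
      (fun a b => amul S (F1 a b) (aconj S (F2 a b)) + amul S (F2 a b) (aconj S (F1 a b)))
    /\ (forall x, Om x -> Nf x = Nfc x) in
  let Uf := bigsph S (Vz S D f) in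
  let Ufc := bigsph S (Vz S D fc) in
  (Vz S D f `<=` [set aconj S y | y in Vz S D Nfc])
  /\
  ((forall x, Om x -> ~ isReal S x -> sph_der_in_CA S f x) ->
     (forall x, Om x ->
        let P := sphere S x `&` Vz S D f in
        let Q := sphere S x `&` Vz S D fc in
        (P = set0 /\ Q = set0)
        \/ ((exists z, P = [set z]) /\ (exists z, Q = [set z]))
        \/ (P = sphere S x /\ Q = sphere S x))
     /\ (Uf `<=` Vz S D Nf /\ Uf = Ufc /\ Ufc `<=` Vz S D Nfc)
     /\ (nonsingular S ->
           Uf = Ufc /\ Ufc = bigsph_in S D (Vz S D Nf `&` Vz S D Nfc)
           /\ (tame -> Uf = Ufc /\ Ufc = Vz S D Nf /\ Vz S D Nf = Vz S D Nfc)))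
  /\
  ((forall x, Om x -> CA S (sph_val S f x)) ->
   (forall x, Om x -> ~ isReal S x -> sph_der_in_CA S f x) ->
     (bigsph_in S D (Vz S D Nf) = Uf /\ Uf = Ufc /\ Ufc = bigsph_in S D (Vz S D Nfc))
     /\ (tame -> Vz S D Nf = Uf /\ Uf = Ufc /\ Ufc = Vz S D Nfc)
     /\ (stem_slice_preserving S D F1 F2 ->
           Vz S D Nf = Vz S D f /\ Vz S D f = Vz S D fc /\ Vz S D fc = Vz S D Nfc)).
Proof.
move=> Om tame Uf Ufc.
split; first exact: part1.
split.
  move=> /VokF H2.
  split; first exact: trich.
  have E := UfUfc H2.
  split; first by split; [exact: (U_sub_VN fam_f H2)|split => //; exact: (U_sub_VN fam_fc (VokFc H2))].
  move=> ns; split => //; split; first exact: part2_ns.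
  case=> T1 T2; split => //; split; first exact: part2_tame.
  apply/seteqP; split => y [Oy hy]; split => //; by [rewrite -T2|rewrite T2].
move=> H3 /VokF H2.
have E := UfUfc H2.
split; first by split; [exact: bin_f|split => //; symmetry; exact: bin_fc].
split; last exact: sp_eq.
case=> T1 T2; split; first exact: tame3.
split => //.
rewrite /Ufc -E -(tame3 H2 H3 T1).
apply/seteqP; split => y [Oy hy]; split => //; by [rewrite T2|rewrite -T2].
Qed.

End Main.

Theorem corollary4p6 (R : realType) (A : vectType R) (S : altStarAlg A)
  (HSA : exists J, sphS S J)
  (D : R -> R -> Prop) (HDne : exists a b, D a b)
  (HDconj : forall a b, D a b -> D a (- b))
  (F1 F2 : R -> R -> A) (HF : is_stem D F1 F2)
  (f fc Nf Nfc : A -> A)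
  (* f = I(F) *)
  (Hf : induces S D F1 F2 f)
  (* f^c = I(F^c) *)
  (Hfc : induces S D (fun a b => aconj S (F1 a b)) (fun a b => aconj S (F2 a b)) fc)
  (* N(f) = f . f^c = I(F F^c) *)
  (HNf : induces S D
     (fun a b => amul S (F1 a b) (aconj S (F1 a b)) - amul S (F2 a b) (aconj S (F2 a b)))
     (fun a b => amul S (F1 a b) (aconj S (F2 a b)) + amul S (F2 a b) (aconj S (F1 a b)))
     Nf)
  (* N(f^c) = f^c . f = I(F^c F) *)
  (HNfc : induces S D
     (fun a b => amul S (aconj S (F1 a b)) (F1 a b) - amul S (aconj S (F2 a b)) (F2 a b))
     (fun a b => amul S (aconj S (F1 a b)) (F2 a b) + amul S (aconj S (F2 a b)) (F1 a b))
     Nfc) :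
  let Om := Omega S D in
  let tame :=
    stem_slice_preserving S D
      (fun a b => amul S (F1 a b) (aconj S (F1 a b)) - amul S (F2 a b) (aconj S (F2 a b)))
      (fun a b => amul S (F1 a b) (aconj S (F2 a b)) + amul S (F2 a b) (aconj S (F1 a b)))
    /\ (forall x, Om x -> Nf x = Nfc x) in
  let Uf := bigsph S (Vz S D f) in
  let Ufc := bigsph S (Vz S D fc) in
  (* (1) *)
  (Vz S D f `<=` [set aconj S y | y in Vz S D Nfc])
  /\
  (* (2) *)
  ((forall x, Om x -> ~ isReal S x -> sph_der_in_CA S f x) ->
     (forall x, Om x ->
        let P := sphere S x `&` Vz S D f in
        let Q := sphere S x `&` Vz S D fc in
        (P = set0 /\ Q = set0)
        \/ ((exists z, P = [set z]) /\ (exists z, Q = [set z]))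
        \/ (P = sphere S x /\ Q = sphere S x))
     /\ (Uf `<=` Vz S D Nf /\ Uf = Ufc /\ Ufc `<=` Vz S D Nfc)
     /\ (nonsingular S ->
           Uf = Ufc /\ Ufc = bigsph_in S D (Vz S D Nf `&` Vz S D Nfc)
           /\ (tame -> Uf = Ufc /\ Ufc = Vz S D Nf /\ Vz S D Nf = Vz S D Nfc)))
  /\
  (* (3) *)
  ((forall x, Om x -> CA S (sph_val S f x)) ->
   (forall x, Om x -> ~ isReal S x -> sph_der_in_CA S f x) ->
     (bigsph_in S D (Vz S D Nf) = Uf /\ Uf = Ufc /\ Ufc = bigsph_in S D (Vz S D Nfc))
     /\ (tame -> Vz S D Nf = Uf /\ Uf = Ufc /\ Ufc = Vz S D Nfc)
     /\ (stem_slice_preserving S D F1 F2 ->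
           Vz S D Nf = Vz S D f /\ Vz S D f = Vz S D fc /\ Vz S D fc = Vz S D Nfc)).

Proof.
case: HSA => J0 HJ0.
exact: (@main R A S D F1 F2 HF J0 HJ0 f fc Nf Nfc Hf Hfc HNf HNfc).
Qed.
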